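(* Let $T$ be a tiling class with finite local complexity and $\mathcal N$ a regular sub-almost-groupoid of $\mathcal M_{II}$. Then for any unit $u\in\mathcal M_{II}^0$ there is a finite subset $\{c_i\}_i\subset\mathcal M_{II}$ such that $U_u$ is the disjoint union $\dot\bigcup_i U_{L(c_i)}$ and $U_{R(c_i)}\subset\Omega_{\mathcal N}$ for all $i$.
   Context: A $d$-dimensional tiling is a countable family of bounded closed subsets of $\mathbb R^d$ (tiles, closures of interiors, finitely many decorations) covering $\mathbb R^d$ and overlapping only at boundaries, up to translation; finite local complexity: finitely many classes of pairs of touching tiles (so the hull is compact). $\mathcal M_{II}$: doubly pointed pattern classes $M_{xy}$; $M_{x_1x_2}\preceq N_{y_1y_2}$ if $N$ contains a translate of $M$ with $x_i$ on $y_i$; $c\vdash c'$ if some $L_{z_1z_2}$ and tile $z$ of $L$ satisfy $c\preceq L_{z_1z}$, $c'\preceq L_{zz_2}$, $cc'$ the minimal such; $(M_{xy})^{-1}=M_{yx}$; units $M_{xx}$ (set $\mathcal M_{II}^0$); $L(c)=cc^{-1}$, $R(c)=c^{-1}c$. A sub-almost-groupoid is a subset closed under inverses and products of composable elements. Hull $\Omega$: completion of the pointed tilings $T_x$ in the tiling metric $d(\omega,\omega')=e^{-\sup\{r:M_r(\omega)=M_r(\omega')\}}$; $u\preceq\omega$ if $u$ occurs at $\omega$'s pointed tile, $U_u=\{\omega:u\preceq\omega\}$; for $L(c)\preceq\omega$, $\omega\cdot c$ is $\omega$ with pointer moved along $c$. $\Omega_{\mathcal N}=\bigcup_{c\in\mathcal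 N}U_{R(c)}$; $\mathcal N$ is regular if for every $\omega\in\Omega$ there is $c\in\mathcal M_{II}$ with $L(c)\preceq\omega$ and $\omega\cdot c\in\Omega_{\mathcal N}$. *)

(* Defs.v *)
(* Tilings of R^d, R : realType,
   points of R^d are row vectors 'rV[R]_d with their (sup) norm. *)
From HB Require Import structures.
From mathcomp Require Import all_boot all_order all_algebra.
From mathcomp Require Import all_classical all_reals all_analysis.
Set Implicit Arguments. Unset Strict Implicit. Unset Printing Implicit Defensive.
Import Order.TTheory GRing.Theory Num.Theory.
Import numFieldNormedType.Exports.
Local Open Scope classical_set_scope.
Local Open Scope ring_scope.

Section Tilings.
Variables (R : realType) (d : nat).

Definition Point := 'rV[R]_d.

(* A tile: its support (a subset of R^d) together with a decoration label. *)
Definition Tile := (set Point * nat)%type.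

Definition tr (v : Point) (t : Tile) : Tile := ((fun p => p + v) @` t.1, t.2).
Definition trP (v : Point) (M : set Tile) : set Tile := tr v @` M.

Definition is_tiling (W : set Tile) : Prop :=
  countable W /\
  (forall t, W t ->
     bounded_set t.1 /\ closure (interior t.1) = t.1 /\ t.1 !=set0) /\
  (forall p : Point, exists t, W t /\ t.1 p) /\
  (forall t t', W t -> W t' -> t <> t' -> interior t.1 `&` interior t'.1 = set0).

Definition FLC (W : set Tile) : Prop :=
  exists P : set (Tile * Tile), finite_set P /\
    forall t t', W t -> W t' -> t.1 `&` t'.1 !=set0 ->
      exists ab, P ab /\ exists v, t = tr v ab.1 /\ t' = tr v ab.2.

(* doubly pointed patterns (representatives of doubly pointed pattern classes) *)
Record DP := mkDP { pat : set Tile; pt1 : Tile; pt2 : Tile }.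

Definition same_class (c c' : DP) : Prop :=
  exists v, trP v (pat c) = pat c' /\ tr v (pt1 c) = pt1 c' /\ tr v (pt2 c) = pt2 c'.

Definition MII (T : set Tile) (c : DP) : Prop :=
  finite_set (pat c) /\ pat c (pt1 c) /\ pat c (pt2 c) /\
  exists v, trP v (pat c) `<=` T.

Definition is_unit (c : DP) : Prop := pt1 c = pt2 c.

Definition preceq (c c' : DP) : Prop :=
  exists v, trP v (pat c) `<=` pat c' /\ tr v (pt1 c) = pt1 c' /\ tr v (pt2 c) = pt2 c'.

Definition dpinv (c : DP) : DP := mkDP (pat c) (pt2 c) (pt1 c).
Definition Lu (c : DP) : DP := mkDP (pat c) (pt1 c) (pt1 c).
Definition Ru (c : DP) : DP := mkDP (pat c) (pt2 c) (pt2 c).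

Definition composable (T : set Tile) (c c' : DP) : Prop :=
  exists L z, MII T L /\ pat L z /\
    preceq c (mkDP (pat L) (pt1 L) z) /\ preceq c' (mkDP (pat L) z (pt2 L)).

Definition is_product (T : set Tile) (c c' e : DP) : Prop :=
  MII T e /\
  (exists z, pat e z /\
     preceq c (mkDP (pat e) (pt1 e) z) /\ preceq c' (mkDP (pat e) z (pt2 e))) /\
  (forall L z, MII T L -> pat L z ->
     preceq c (mkDP (pat L) (pt1 L) z) -> preceq c' (mkDP (pat L) z (pt2 L)) ->
     preceq e L).

(* N is a sub-almost-groupoid of M_II (N is a set of classes, i.e. saturated
   under same_class) *)
Definition sub_almost_groupoid (T : set Tile) (N : set DP) : Prop :=
  N `<=` MII T /\
  (forall c c', same_class c c' -> N c -> N c') /\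
  (forall c, N c -> N (dpinv c)) /\
  (forall c c' e, N c -> N c' -> composable T c c' -> is_product T c c' e -> N e).

Definition PTiling := (set Tile * Tile)%type.

Definition patch (r : R) (w : PTiling) : set Tile :=
  [set s | w.1 s /\ exists p q, s.1 p /\ w.2.1 q /\ `|p - q| <= r].

Definition same_pointed (M : set Tile) (x : Tile) (M' : set Tile) (x' : Tile) :=
  exists v, trP v M = M' /\ tr v x = x'.

(* The hull Omega (completion of {T_x}): the pointed tilings all of whose
   patches M_r occur as patches M_r(T_x) of T. *)
Definition hull (T : set Tile) : set PTiling :=
  [set w | is_tiling w.1 /\ w.1 w.2 /\
     forall r : R, exists x, T x /\
       same_pointed (patch r w) w.2 (patch r (T, x)) x].

Definition occurs_at (u : DP) (w : PTiling) : Prop :=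
  exists v, trP v (pat u) `<=` w.1 /\ tr v (pt1 u) = w.2.

Definition Uset (T : set Tile) (u : DP) : set PTiling :=
  [set w | hull T w /\ occurs_at u w].

Definition act (c : DP) (w w' : PTiling) : Prop :=
  exists v, trP v (pat c) `<=` w.1 /\ tr v (pt1 c) = w.2 /\
            w'.1 = w.1 /\ w'.2 = tr v (pt2 c).

Definition OmegaN (T : set Tile) (N : set DP) : set PTiling :=
  [set w | exists c, N c /\ Uset T (Ru c) w].

Definition regular (T : set Tile) (N : set DP) : Prop :=
  forall w, hull T w -> exists c w', MII T c /\ occurs_at (Lu c) w /\
     act c w w' /\ OmegaN T N w'.

End Tilings.

(* Main.v *)
Require Import Defs.
From HB Require Import structures.
From mathcomp Require Import all_boot all_order all_algebra.
From mathcomp Require Import all_classical all_reals all_analysis.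
From mathcomp Require Import zify.
Set Implicit Arguments. Unset Strict Implicit. Unset Printing Implicit Defensive.
Local Open Scope classical_set_scope.
Local Open Scope ring_scope.
Import Order.TTheory GRing.Theory Num.Theory.
Import numFieldNormedType.Exports.

Section Basics.
Variables (R : realType) (d : nat).
Local Notation Tile := (Tile R d).
Local Notation Point := (Point R d).
Implicit Types (p q : Point) (t s : Tile) (M W : set Tile).

Lemma ballE (x y : Point) e : ball x e y <-> `|x - y| < e.
Proof. by rewrite -ball_normE. Qed.

Lemma interiorP (S : set Point) p :
  interior S p <-> exists2 e, 0 < e & forall y, `|p - y| < e -> S y.
Proof.
rewrite /interior /= nbhs_ballP; split.
- by case=> e e0 H; exists e => // y /ballE; apply: H.
- by case=> e e0 H; exists e => //= y /ballE; apply: H.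
Qed.

Lemma closureP (S : set Point) p :
  closure S p <-> forall e, 0 < e -> exists y, S y /\ `|p - y| < e.
Proof.
split.
- move=> H e e0; have : nbhs p (ball p e) by apply: nbhsx_ballx.
  by move/H => [y [Sy /ballE]]; exists y.
- move=> H B /nbhs_ballP [e e0 Hb]; have [y [Sy pe]] := H e e0.
  by exists y; split => //; apply: Hb; apply/ballE.
Qed.

Lemma imgaddE (S : set Point) v y : ((fun p => p + v) @` S) y <-> S (y - v).
Proof.
split; first by case=> p Sp <-; rewrite addrK.
by move=> H; exists (y - v) => //; rewrite subrK.
Qed.

Lemma imgadd0 (S : set Point) : (fun p => p + 0) @` S = S.
Proof.
apply/seteqP; split => y; first by move/imgaddE; rewrite subr0.
by move=> Sy; apply/imgaddE; rewrite subr0.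
Qed.

Lemma imgaddD (S : set Point) a b :
  (fun p => p + a) @` ((fun p => p + b) @` S) = (fun p => p + (b + a)) @` S.
Proof.
apply/seteqP; split => y H.
  have H1 := iffLR (imgaddE _ _ _) H.
  have H2 := iffLR (imgaddE _ _ _) H1.
  apply/imgaddE.
  by rewrite opprD addrA addrAC.
have H2 := iffLR (imgaddE _ _ _) H.
have H3 : S (y - a - b) by rewrite opprD addrA addrAC in H2.
by apply/(imgaddE _ a); apply/imgaddE.
Qed.

Lemma tr0 t : tr 0 t = t.
Proof. by case: t => S n; rewrite /tr /= imgadd0. Qed.

Lemma trD a b t : tr a (tr b t) = tr (b + a) t.
Proof. by rewrite /tr /= imgaddD. Qed.

Lemma trK v t : tr (- v) (tr v t) = t.
Proof. by rewrite trD subrr tr0. Qed.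

Lemma trNK v t : tr v (tr (- v) t) = t.
Proof. by rewrite trD addNr tr0. Qed.

Lemma tr_inj v : injective (@tr R d v).
Proof. by move=> t t' H; rewrite -(trK v t) H trK. Qed.

Lemma trP0 M : trP 0 M = M.
Proof.
apply/seteqP; split => t; first by case=> s Ms <-; rewrite tr0.
by move=> Mt; exists t => //; rewrite tr0.
Qed.

Lemma trPD a b M : trP a (trP b M) = trP (b + a) M.
Proof.
apply/seteqP; split => t.
- by case=> s [s' Ms' <-] <-; exists s' => //; rewrite trD.
- by case=> s Ms <-; exists (tr b s); [exists s|rewrite trD].
Qed.

Lemma trPE v M t : trP v M t <-> M (tr (- v) t).
Proof.
split; first by case=> s Ms <-; rewrite trK.
by move=> H; exists (tr (-v) t) => //; rewrite trNK.
Qed.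

Lemma trP_mem v M t : M t -> trP v M (tr v t).
Proof. by move=> Mt; exists t. Qed.

Lemma trPK v M : trP (- v) (trP v M) = M.
Proof. by rewrite trPD subrr trP0. Qed.

Lemma trPS v M M' : M `<=` M' -> trP v M `<=` trP v M'.
Proof. by move=> H t [s Ms <-]; exists s => //; apply: H. Qed.

Lemma trPS_inv v M M' : trP v M `<=` trP v M' -> M `<=` M'.
Proof. by move=> H t Mt; have /trPE := H _ (trP_mem v Mt); rewrite trK. Qed.

Lemma trPI v M M' : trP v (M `&` M') = trP v M `&` trP v M'.
Proof.
apply/seteqP; split => t.
- by case=> s [Ms M's] <-; split; exists s.
- by case=> /trPE H1 /trPE H2; apply/trPE.
Qed.

Lemma normB_sym p q : `|p - q| = `|q - p|.
Proof. by rewrite -normrN opprB. Qed.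

Lemma interior_tr (S : set Point) v :
  interior ((fun p => p + v) @` S) = (fun p => p + v) @` interior S.
Proof.
apply/seteqP; split => y.
- move/interiorP => [e e0 H]; apply/imgaddE; apply/interiorP; exists e => // z Hz.
  have : ((fun p => p + v) @` S) (z + v).
    by apply: H; rewrite opprD addrA addrAC.
  by move/imgaddE; rewrite addrK.
- move/imgaddE/interiorP => [e e0 H]; apply/interiorP; exists e => // z Hz.
  apply/imgaddE; apply: H.
  by rewrite opprB addrA subrK.
Qed.

Lemma closure_tr (S : set Point) v :
  closure ((fun p => p + v) @` S) = (fun p => p + v) @` closure S.
Proof.
apply/seteqP; split => y.
- move/closureP => H; apply/imgaddE; apply/closureP => e e0.
  have [z [/imgaddE Sz ez]] := H e e0; exists (z - v); split => //.
  by rewrite opprB addrA subrK.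
- move/imgaddE/closureP => H; apply/closureP => e e0.
  have [z [Sz ez]] := H e e0; exists (z + v); split; first by exists z.
  by rewrite opprD addrA addrAC.
Qed.

End Basics.

Section Geo.
Variables (R : realType) (d : nat).
Local Notation Tile := (Tile R d).
Local Notation Point := (Point R d).
Implicit Types (p q : Point) (t s x : Tile) (W : set Tile).

Definition tileok t := bounded_set t.1 /\ closure (interior t.1) = t.1 /\ t.1 !=set0.

Lemma boundedP (A : set Point) : bounded_set A -> exists M, forall y, A y -> `|y| <= M.
Proof. by case=> M0 [_ H]; exists (M0 + 1); apply: H; rewrite ltrDl. Qed.

Lemma boundedI (A : set Point) M : (forall y, A y -> `|y| <= M) -> bounded_set A.
Proof.
move=> H; exists M; split; first by rewrite num_real.
move=> z Mz y Ay; rewrite /=; apply: le_trans (H _ Ay) _; exact: ltW.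
Qed.

Lemma tileok_tr v t : tileok t -> tileok (tr v t).
Proof.
case=> [bd [cl [p tp]]]; split; last split.
- have [M HM] := boundedP bd; apply: (@boundedI _ (M + `|v|)) => y /imgaddE H.
  have := HM _ H; move=> H2; rewrite -(subrK v y).
  by apply: le_trans (ler_normD _ _) _; rewrite lerD2r.
- by rewrite /= interior_tr closure_tr cl.
- by exists (p + v); exists p.
Qed.

Lemma tiling_ok W t : is_tiling W -> W t -> tileok t.
Proof. by case=> _ [H _] /H [? [? ?]]. Qed.

Lemma tileok_approx t p e : tileok t -> t.1 p -> 0 < e ->
  exists p', interior t.1 p' /\ `|p - p'| < e.
Proof.
case=> _ [cl _] tp e0; rewrite -cl in tp.
by move/closureP: tp => /(_ e e0).
Qed.

Lemma tileok_int t : tileok t -> exists p, interior t.1 p.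
Proof.
move=> tk; have [_ [_ [p tp]]] := tk.
by have [p' [Hp' _]] := tileok_approx tk tp ltr01; exists p'.
Qed.

Lemma tileok_closed t : tileok t -> closed t.1.
Proof. by case=> _ [cl _]; rewrite -cl; exact: closed_closure. Qed.

Lemma tiling_int_mem W t t' p : is_tiling W -> W t -> W t' ->
  interior t.1 p -> t'.1 p -> t = t'.
Proof.
move=> tW Wt Wt' ip tp'; apply: contrapT => ne.
have [_ [_ [_ dis]]] := tW.
have E := dis _ _ Wt Wt' ne.
suff [z Hz] : (interior t.1 `&` interior t'.1) !=set0 by rewrite E in Hz.
have /interiorP [e e0 He] : interior (interior t.1) p.
  by have := @open_interior _ t.1; rewrite openE; apply.
have [q [iq pq]] := tileok_approx (tiling_ok tW Wt') tp' e0.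
by exists q; split => //; apply: He.
Qed.

Definition nearTl (r : R) (x s : Tile) := exists p q, interior s.1 p /\ x.1 q /\ `|p - q| < r.
Definition Fp (r : R) (W : set Tile) (x : Tile) := W `&` nearTl r x.

Lemma nearTl_tr r v x s : nearTl r (tr v x) (tr v s) <-> nearTl r x s.
Proof.
split.
- case=> p [q [ip [/imgaddE xq pq]]]; rewrite /= interior_tr in ip.
  move/imgaddE: ip => ip; exists (p - v), (q - v); split => //; split => //.
  by rewrite opprB addrA subrK.
- case=> p [q [ip [xq pq]]]; exists (p + v), (q + v); split.
    by rewrite /= interior_tr; exists p.
  split; first by exists q.
  by rewrite opprD addrA addrAC addrK.
Qed.

Lemma nearTl_mono r r' x s : r <= r' -> nearTl r x s -> nearTl r' x s.
Proof.
by move=> rr [p [q [ip [xq pq]]]]; exists p, q; split => //; split => //; apply: lt_le_trans rr.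
Qed.

Lemma Fp_sub r W x : Fp r W x `<=` W.
Proof. by move=> s []. Qed.

Lemma Fp_tr r v W x : Fp r (trP v W) (tr v x) = trP v (Fp r W x).
Proof.
apply/seteqP; split => s.
- case=> /trPE Ws ns; apply/trPE; split => //.
  by rewrite -(trNK v s) nearTl_tr in ns.
- case=> s' [Ws' ns'] <-; split; first by exists s'.
  by rewrite nearTl_tr.
Qed.

Lemma Fp_mono r r' W W' x : r <= r' -> W `<=` W' -> Fp r W x `<=` Fp r' W' x.
Proof. by move=> rr WW s [Ws ns]; split; [apply: WW|apply: nearTl_mono ns]. Qed.

Lemma Fp_Fp r r' W x : r <= r' -> Fp r (Fp r' W x) x = Fp r W x.
Proof.
move=> rr; apply/seteqP; split => s; first by case=> -[].
by case=> Ws ns; split => //; split => //; apply: nearTl_mono ns.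
Qed.

Lemma Fp_self W x r : 0 < r -> tileok x -> W x -> Fp r W x x.
Proof.
move=> r0 xk Wx; split => //; have [p ip] := tileok_int xk.
by exists p, p; split => //; split; [apply: interior_subset|rewrite subrr normr0].
Qed.

End Geo.

Section ListBounds.
Variable R : realType.

Lemma list_ub (A : eqType) (l : seq A) (Q : A -> R -> Prop) :
  (forall a D D', D <= D' -> Q a D -> Q a D') ->
  (forall a, a \in l -> exists D, Q a D) -> exists D, forall a, a \in l -> Q a D.
Proof.
move=> mono; elim: l => [|b l IH] H; first by exists 0.
have [D1 HD1] := H b (mem_head _ _).
have [D2 HD2] : exists D, forall a, a \in l -> Q a D.
  by apply: IH => a al; apply: H; rewrite inE al orbT.
exists (Num.max D1 D2) => a; rewrite inE => /orP [/eqP ->|al].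
  by apply: mono HD1; rewrite le_max lexx.
by apply: mono (HD2 _ al); rewrite le_max lexx orbT.
Qed.

Lemma list_lb (A : eqType) (l : seq A) (Q : A -> R -> Prop) :
  (forall a D D', 0 < D' -> D' <= D -> Q a D -> Q a D') ->
  (forall a, a \in l -> exists2 D, 0 < D & Q a D) ->
  exists2 D, 0 < D & forall a, a \in l -> Q a D.
Proof.
move=> mono; elim: l => [|b l IH] H; first by exists 1.
have [D1 D10 HD1] := H b (mem_head _ _).
have [D2 D20 HD2] : exists2 D, 0 < D & forall a, a \in l -> Q a D.
  by apply: IH => a al; apply: H; rewrite inE al orbT.
exists (Num.min D1 D2); first by rewrite lt_min D10 D20.
move=> a; rewrite inE => /orP [/eqP ->|al].
  by apply: mono HD1; [rewrite lt_min D10 D20|rewrite ge_min lexx].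
by apply: mono (HD2 _ al); [rewrite lt_min D10 D20|rewrite ge_min lexx orbT].
Qed.

End ListBounds.

Section SupNorm.
Variables (R : realType) (d : nat).
Local Notation Point := (Point R d).

Lemma coord_le (x : Point) i : `|x 0 i| <= `|x|.
Proof.
have : mx_norm x <= `|x| by [].
rewrite mx_normrE => /bigmax_leP [_].
by move/(_ (0, i) isT).
Qed.

Lemma norm_lt_coord (x : Point) e : 0 < e -> (forall i, `|x 0 i| < e) -> `|x| < e.
Proof.
move=> e0 H; rewrite (_ : `|x| = mx_norm x) // mx_normrE; apply/bigmax_ltP; split => // -[i j] _ /=.
by rewrite (ord1 i); apply: H.
Qed.

End SupNorm.

Section Rigid.
Variables (R : realType) (d : nat).
Local Notation Tile := (Tile R d).
Local Notation Point := (Point R d).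

Lemma tr_rigid (t : Tile) (a b : Point) : tileok t -> tr a t = tr b t -> a = b.
Proof.
move=> tk E; have E1 : (fun p => p + a) @` t.1 = (fun p => p + b) @` t.1 by case: E.
have [bd [_ [p tp]]] := tk; have [M HM] := boundedP bd.
set c := a - b.
have step : forall y, t.1 y -> t.1 (y + c).
  move=> y ty; have : ((fun p => p + b) @` t.1) (y + a) by rewrite -E1; exists y.
  by move/imgaddE; rewrite /c addrA.
have iter : forall n, t.1 (p + c *+ n).
  elim=> [|n IH]; first by rewrite mulr0n addr0.
  by rewrite mulrS addrCA addrC; apply: step.
apply/eqP; rewrite -subr_eq0 -/c; apply/eqP/normr0_eq0.
apply/eqP; rewrite eq_le normr_ge0 andbT; apply/negP => /negP; rewrite -ltNge => c0.
set n := (Num.trunc ((M + `|p|) / `|c|)).+1.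
have H1 : `|c| *+ n <= M + `|p|.
  rewrite -normrMn; have := HM _ (iter n).
  move=> H; rewrite -(addKr p (c *+ n)).
  apply: le_trans (ler_normD _ _) _; rewrite normrN addrC; rewrite lerD2r.
  exact: H.
have H2 : M + `|p| < `|c| *+ n.
  rewrite -mulr_natl -ltr_pdivrMr //; exact: truncnS_gt.
by move: (lt_le_trans H2 H1); rewrite ltxx.
Qed.

End Rigid.

Section Core.
Variables (R : realType) (d : nat).
Local Notation Tile := (Tile R d).
Local Notation Point := (Point R d).
Variable T : set Tile.
Hypothesis hT : is_tiling T.
Hypothesis hF : FLC T.

Definition touch (t t' : Tile) := (t.1 `&` t'.1) !=set0.

Lemma Plist_ex : exists Pl : seq (Tile * Tile), forall t t', T t -> T t' -> touch t t' ->
  exists2 ab, ab \in Pl & exists v, t = tr v ab.1 /\ t' = tr v ab.2.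
Proof.
case: hF => P [/finite_seqP [Pl ->] H]; exists Pl => t t' Tt Tt' tt.
by have [ab [Pab Hab]] := H t t' Tt Tt' tt; exists ab.
Qed.

Lemma T_ok t : T t -> tileok t.
Proof. exact: tiling_ok. Qed.

Lemma touch_refl t : T t -> touch t t.
Proof. by move=> /T_ok [_ [_ [p tp]]]; exists p. Qed.

Lemma unif_diam : exists D, forall t, T t -> forall p p', t.1 p -> t.1 p' -> `|p - p'| <= D.
Proof.
have [Pl HPl] := Plist_ex.
pose Q (ab : Tile * Tile) D := (exists v, T (tr v ab.1)) ->
  forall p p', ab.1.1 p -> ab.1.1 p' -> `|p - p'| <= D.
have [D HD] : exists D, forall ab, ab \in Pl -> Q ab D.
  apply: list_ub.
    by move=> ab D D' DD' H ex p p' tp tp'; apply: le_trans (H ex p p' tp tp') DD'.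
  move=> ab _; case: (pselect (exists v, T (tr v ab.1))) => [[v Tv]|nex]; last first.
    by exists 0 => ex; exfalso; apply: nex.
  have [bd _] := T_ok Tv; have [M HM] := boundedP bd.
  exists (M + M) => _ p p' tp tp'.
  have h1 := HM (p + v) (ex_intro2 _ _ p tp erefl).
  have h2 := HM (p' + v) (ex_intro2 _ _ p' tp' erefl).
  have -> : p - p' = (p + v) - (p' + v) by rewrite opprD addrA addrAC addrK.
  apply: le_trans (ler_normB _ _) _; exact: lerD.
exists D => t Tt p p' tp tp'.
have [ab abP [v [E1 _]]] := HPl t t Tt Tt (touch_refl Tt).
have : Q ab D by apply: HD.
have ex : exists v, T (tr v ab.1) by exists v; rewrite -E1.
rewrite /Q => /(_ ex) H.
rewrite E1 in tp tp'; move/imgaddE: tp => tp; move/imgaddE: tp' => tp'.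
have := H _ _ tp tp'; suff -> : p - p' = (p - v) - (p' - v) by [].
by rewrite opprB addrA subrK.
Qed.

Lemma ball_interior (S : set Point) p e : (forall y, `|p - y| < e -> S y) ->
  forall y, `|p - y| < e -> interior S y.
Proof.
move=> H y py; apply/interiorP; exists (e - `|p - y|); first by rewrite subr_gt0.
move=> z yz; apply: H.
have -> : p - z = (p - y) + (y - z) by rewrite addrA subrK.
apply: le_lt_trans (ler_normD _ _) _; by rewrite -ltrBrDl.
Qed.

Lemma unif_rho : exists2 rho, 0 < rho & forall t, T t ->
  exists c, forall y, `|c - y| < rho -> interior t.1 y.
Proof.
have [Pl HPl] := Plist_ex.
pose Q (ab : Tile * Tile) rho := (exists v, T (tr v ab.1)) ->
  exists c, forall y, `|c - y| < rho -> interior ab.1.1 y.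
have [rho rho0 Hrho] : exists2 rho, 0 < rho & forall ab, ab \in Pl -> Q ab rho.
  apply: list_lb.
    move=> ab D D' D'0 DD' H ex; have [c Hc] := H ex; exists c => y cy.
    by apply: Hc; apply: lt_le_trans DD'.
  move=> ab _; case: (pselect (exists v, T (tr v ab.1))) => [[v Tv]|nex]; last first.
    by exists 1 => // ex; exfalso; apply: nex.
  have [p ip] := tileok_int (T_ok Tv).
  rewrite /= interior_tr in ip; move/imgaddE: ip => /interiorP [e e0 He].
  exists e => // _; exists (p - v); exact: ball_interior.
exists rho => // t Tt.
have [ab abP [v [E1 _]]] := HPl t t Tt Tt (touch_refl Tt).
have ex : exists v, T (tr v ab.1) by exists v; rewrite -E1.
have [c Hc] := Hrho ab abP ex.
exists (c + v) => y cy; rewrite E1 /= interior_tr; apply/imgaddE; apply: Hc.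
by rewrite opprB addrA.
Qed.

End Core.

Section Count.
Variables (R : realType) (d : nat).
Local Notation Tile := (Tile R d).
Local Notation Point := (Point R d).
Variable T : set Tile.
Hypothesis hT : is_tiling T.
Variables (D rho : R).
Hypothesis hD : forall t, T t -> forall p p', t.1 p -> t.1 p' -> `|p - p'| <= D.
Hypothesis hrho0 : 0 < rho.
Hypothesis hrho : forall t, T t -> exists c, forall y, `|c - y| < rho -> interior t.1 y.

Definition ctr (t : Tile) : Point :=
  xget 0 [set c | forall y, `|c - y| < rho -> interior t.1 y].

Lemma ctrP t : T t -> forall y, `|ctr t - y| < rho -> interior t.1 y.
Proof. by move=> Tt; rewrite /ctr; apply: (xgetPex 0 (hrho Tt)). Qed.

Lemma ctr_in t : T t -> t.1 (ctr t).
Proof. by move=> Tt; apply: interior_subset; apply: ctrP => //; rewrite subrr normr0. Qed.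

Definition Sq (q : Point) (R0 : R) := [set t | T t /\ exists p, t.1 p /\ `|p - q| <= R0].

Definition Kb (R0 : R) : nat := (Num.truncn ((R0 + D) / rho)).+1.

Definition GridT (R0 : R) := {ffun 'I_d -> 'I_((Kb R0).*2).+1}.

Definition kf (q : Point) (t : Tile) (i : 'I_d) : int :=
  Num.floor ((ctr t 0 i - q 0 i) / rho).

Definition phi (q : Point) (R0 : R) (t : Tile) : GridT R0 :=
  [ffun i => inord (absz (kf q t i + (Kb R0)%:Z))].

Lemma kf_bound q R0 t i : Sq q R0 t ->
  ((- ((Kb R0)%:Z) <= kf q t i)%R) /\ ((kf q t i < (Kb R0)%:Z)%R).
Proof.
case=> Tt [p [tp pq]].
have hc : `|ctr t 0 i - q 0 i| <= R0 + D.
  have -> : ctr t 0 i - q 0 i = (ctr t - q) 0 i by rewrite !mxE.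
  apply: le_trans (coord_le _ _) _.
  have -> : ctr t - q = (ctr t - p) + (p - q) by rewrite addrA subrK.
  apply: le_trans (ler_normD _ _) _; rewrite addrC; apply: lerD => //.
  exact: hD (ctr_in Tt) tp.
set X := (ctr t 0 i - q 0 i) / rho.
have hX : `|X| < (Kb R0)%:R.
  apply: le_lt_trans (truncnS_gt _); rewrite /X normrM normfV (gtr0_norm hrho0).
  by rewrite ler_pM2r ?invr_gt0.
rewrite ltr_norml in hX; case/andP: hX => h1 h2.
split.
- have : - (Kb R0)%:R < (Num.floor X + 1)%:~R :> R.
    by apply: lt_trans h1 (floorD1_gt X).
  rewrite -[_%:R]/((Kb R0)%:Z%:~R) -rmorphN ltr_int ltzD1.
  by rewrite /kf -/X.
- have := le_lt_trans (floor_le X) h2; rewrite -[_%:R]/((Kb R0)%:Z%:~R) ltr_int.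
  by rewrite /kf -/X.
Qed.

Lemma phi_val q R0 t i : Sq q R0 t ->
  ((phi q R0 t i : nat)%:Z = kf q t i + (Kb R0)%:Z)%R.
Proof.
move=> St; have [b1 b2] := kf_bound i St.
have z0 : (0 <= kf q t i + (Kb R0)%:Z)%R by rewrite -lterBDr sub0r.
rewrite ffunE inordK; first by rewrite gez0_abs.
rewrite -ltz_nat gez0_abs //; move: b2; rewrite -addnn; lia.
Qed.

Definition grid (q : Point) (t : Tile) : Point := \row_i (q 0 i + rho * (kf q t i)%:~R).

Lemma grid_close q R0 t : Sq q R0 t -> `|ctr t - grid q t| < rho.
Proof.
move=> St; apply: norm_lt_coord => // i; rewrite !mxE.
set X := (ctr t 0 i - q 0 i) / rho.
have e1 : rho * (kf q t i)%:~R <= ctr t 0 i - q 0 i.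
  by rewrite mulrC -ler_pdivlMr //; exact: floor_le.
have e2 : ctr t 0 i - q 0 i < rho * (kf q t i)%:~R + rho.
  have := floorD1_gt X; rewrite /X ltr_pdivrMr // => h.
  suff <- : (kf q t i + 1)%:~R * rho = rho * (kf q t i)%:~R + rho by [].
  by rewrite intrD mulrDl mul1r mulrC.
rewrite opprD addrA ger0_norm; last by rewrite subr_ge0.
by rewrite ltrBlDr (addrC rho).
Qed.

Lemma phi_inj q R0 t t' : Sq q R0 t -> Sq q R0 t' -> phi q R0 t = phi q R0 t' -> t = t'.
Proof.
move=> St St' E.
have kfeq : forall i, kf q t i = kf q t' i.
  move=> i; have := phi_val i St; rewrite E phi_val // => /addIr.
  by [].
have ge : grid q t = grid q t' by apply/rowP => i; rewrite !mxE kfeq.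
have i1 := ctrP St.1 (grid_close St).
have i2 := ctrP St'.1 (grid_close St'); rewrite -ge in i2.
exact: tiling_int_mem hT St.1 St'.1 i1 (interior_subset i2).
Qed.

End Count.

Section Reach.
Variables (R : realType) (d : nat).
Local Notation Tile := (Tile R d).
Local Notation Point := (Point R d).
Variable T : set Tile.
Hypothesis hT : is_tiling T.
Variables (D rho : R).
Hypothesis hD : forall t, T t -> forall p p', t.1 p -> t.1 p' -> `|p - p'| <= D.
Hypothesis hrho0 : 0 < rho.
Hypothesis hrho : forall t, T t -> exists c, forall y, `|c - y| < rho -> interior t.1 y.

Local Notation Sq := (Sq T).
Local Notation phi := (phi D rho).
Local Notation GridT := (@GridT R d D rho).

Definition tile0 : Tile := (set0, 0%N).

Lemma Sq_finite q R0 : finite_set (Sq q R0).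
Proof.
pose inv (g : GridT R0) := xget tile0 [set t | Sq q R0 t /\ phi q R0 t = g].
suff -> : Sq q R0 = inv @` [set g | exists t, Sq q R0 t /\ phi q R0 t = g].
  by apply: finite_image; exact: finite_finset.
apply/seteqP; split => t.
- move=> St; exists (phi q R0 t); first by exists t.
  have [] := xgetPex tile0 (ex_intro _ t (conj St erefl) : exists t0, Sq q R0 t0 /\ phi q R0 t0 = phi q R0 t).
  by move=> St' E; apply: (phi_inj hT hD hrho0 hrho) St' St E.
- case=> g [t' [St' <-]] <-.
  by have [] := xgetPex tile0 (ex_intro _ t' (conj St' erefl) : exists t0, Sq q R0 t0 /\ phi q R0 t0 = phi q R0 t').
Qed.

Variables (q : Point) (R0 : R) (x0 : Tile).
Hypothesis Tx0 : T x0.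
Hypothesis qx0 : x0.1 q.
Hypothesis R00 : 0 <= R0.

Definition rstep (A : set Tile) :=
  A `|` [set t' | Sq q R0 t' /\ exists t, A t /\ touch t t'].

Fixpoint Reach (k : nat) : set Tile :=
  if k is k'.+1 then rstep (Reach k') else [set x0].

Lemma x0_Sq : Sq q R0 x0.
Proof. by split => //; exists q; split => //; rewrite subrr normr0. Qed.

Lemma Reach_sub k : Reach k `<=` Sq q R0.
Proof.
elim: k => [|k IH] t /=; first by move=> ->; exact: x0_Sq.
by case=> [/IH|[]].
Qed.

Lemma Reach_mono k m : (k <= m)%N -> Reach k `<=` Reach m.
Proof.
move=> /subnK <-; elim: (m - k)%N => [|j IH] //= t /IH H.
by left.
Qed.

Definition Xs (k : nat) : {set GridT R0} :=
  [set g | `[< exists t, Reach k t /\ phi q R0 t = g >]].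

Lemma Xs_eq k : Xs k = Xs k.+1 -> Reach k = Reach k.+1.
Proof.
move=> E; apply/seteqP; split; first by apply: Reach_mono.
move=> t Rt.
have : phi q R0 t \in Xs k.+1 by rewrite inE; apply/asboolP; exists t.
rewrite -E inE => /asboolP [t' [Rt' Et']].
have <- // : t' = t.
exact: (phi_inj hT hD hrho0 hrho) (Reach_sub Rt') (Reach_sub Rt) Et'.
Qed.

Lemma Reach_const k : Reach k = Reach k.+1 -> forall j, Reach (k + j) = Reach k.
Proof.
move=> E; elim=> [|j IH]; first by rewrite addn0.
by rewrite addnS /= IH; exact: (esym E).
Qed.

Lemma Xs_sub k : Xs k \subset Xs k.+1.
Proof.
apply/fintype.subsetP => g; rewrite !inE => -[t [Rt Et]].
exists t; split => //; by left.
Qed.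

Definition NB := #|GridT R0|.

Lemma Xs_stab : exists2 k, (k <= NB)%N & Xs k = Xs k.+1.
Proof.
apply: contrapT => H.
have H' : forall k, (k <= NB)%N -> Xs k != Xs k.+1.
  by move=> k kN; apply/eqP => E; apply: H; exists k.
have card : forall k, (k <= NB.+1)%N -> (k <= #|Xs k|)%N.
  elim=> [|k IH] kN //.
  have : Xs k \proper Xs k.+1 by rewrite finset.properEneq H' ?Xs_sub //.
  move/proper_card; have := IH (ltnW kN); lia.
have := card _ (leqnn _); have := max_card (Xs NB.+1); rewrite /NB => h1 h2.
by have := leq_ltn_trans h1 h2; rewrite ltnn.
Qed.

Lemma Reach_stab m : Reach m `<=` Reach NB.
Proof.
have [k kN /Xs_eq E] := Xs_stab.
case: (leqP m NB) => mN; first exact: Reach_mono.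
have -> : m = (k + (m - k))%N by lia.
by rewrite Reach_const // ; apply: Reach_mono.
Qed.

Lemma segf_cont (w : Point) : continuous (fun l : R => q + l *: w).
Proof.
move=> x.
have h1 : {for x, continuous (fun l : R => l *: w)} by apply: continuousZr_tmp.
have h2 : {for x, continuous (fun _ : R => q)} by exact: cst_continuous.
exact: (@continuousD _ _ _ (fun _ : R => q) (fun l : R => l *: w) x h2 h1).
Qed.

Lemma Reach_all t p : T t -> t.1 p -> `|p - q| <= R0 -> exists k, Reach k t.
Proof.
move=> Tt tp pq.
pose A := [set t | exists k, Reach k t].
pose f := fun l : R => q + l *: (p - q).
have fc : continuous f by apply: segf_cont.
have cl : forall t, T t -> closed (f @^-1` t.1).
  by move=> t' Tt'; apply: (iffLR (continuous_closedP f)) fc _ (tileok_closed (tiling_ok hT Tt')).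
pose CA := \bigcup_(t in Sq q R0 `&` A) (f @^-1` t.1).
pose CB := \bigcup_(t in Sq q R0 `&` ~` A) (f @^-1` t.1).
have cCA : closed CA.
  apply: closed_bigcup; first exact/finite_setIl/Sq_finite.
  by move=> t' [[Tt' _] _]; apply: cl.
have cCB : closed CB.
  apply: closed_bigcup; first exact/finite_setIl/Sq_finite.
  by move=> t' [[Tt' _] _]; apply: cl.
have dis : CA `&` CB = set0.
  apply/seteqP; split => // l [[tA [SA [k RA]] fA] [tB [SB nB] fB]].
  apply: nB; exists k.+1; right; split => //; exists tA; split => //.
  by exists (f l).
have sep : separated CA CB.
  by split; [rewrite -(iffLR (closure_id _) cCA)|rewrite -(iffLR (closure_id _) cCB)].
have cov : `[0, 1]%classic `<=` CA `|` CB.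
  move=> l; rewrite /= in_itv /= => /andP [l0 l1].
  have [_ [_ [cov _]]] := hT.
  have [t' [Tt' tf]] := cov (f l).
  have St' : Sq q R0 t'.
    split => //; exists (f l); split => //.
    have -> : f l - q = l *: (p - q) by rewrite /f addrAC subrr add0r.
    rewrite normrZ ger0_norm //.
    by apply: le_trans pq; rewrite ler_piMl.
  case: (pselect (A t')) => At'; [left|right]; exists t' => //.
have [sub|sub] := connected_subset sep cov (@segment_connected _ 0 1).
- have : CA 1 by apply: sub; rewrite /= in_itv /= ler01 lexx.
  case=> tA [SA [k RA]]; rewrite /f /= scale1r addrC subrK => pA.
  exists k.+1; right; split.
    by split => //; exists p.
  by exists tA; split => //; exists p.
- have : CB 0 by apply: sub; rewrite /= in_itv /= ler01 lexx.
  have : CA 0.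
    exists x0; last by rewrite /f /= scale0r addr0.
    by split; [exact: x0_Sq|exists 0%N].
  by move=> a b; have : (CA `&` CB) 0 by []; rewrite dis.
Qed.

End Reach.

Section Cand.
Variables (R : realType) (d : nat).
Local Notation Tile := (Tile R d).
Local Notation Point := (Point R d).
Variable T : set Tile.
Hypothesis hT : is_tiling T.
Variable Pl : seq (Tile * Tile).
Hypothesis HPl : forall t t', T t -> T t' -> touch t t' ->
  exists2 ab, ab \in Pl & exists v, t = tr v ab.1 /\ t' = tr v ab.2.

Definition cstep (b : Tile) (ab : Tile * Tile) : Tile :=
  match pselect (exists w, tr w ab.1 = b) with
  | left H => tr (projT1 (cid H)) ab.2
  | right _ => b
  end.

Fixpoint Cand (a : Tile) (k : nat) : seq Tile :=
  if k is k'.+1 then Cand a k' ++ [seq cstep b ab | b <- Cand a k', ab <- Pl]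
  else [:: a].

Variables (D rho : R).
Hypothesis hD : forall t, T t -> forall p p', t.1 p -> t.1 p' -> `|p - p'| <= D.
Hypothesis hrho0 : 0 < rho.
Hypothesis hrho : forall t, T t -> exists c, forall y, `|c - y| < rho -> interior t.1 y.

Lemma Reach_Cand q R0 x0 v a : T x0 -> x0.1 q -> 0 <= R0 -> x0 = tr v a ->
  forall k, Reach T q R0 x0 k `<=` trP v [set` Cand a k].
Proof.
move=> Tx0 qx0 R00 xa; elim=> [|k IH] t /=.
  by move=> ->; rewrite xa; apply: trP_mem; rewrite /= inE.
case=> [/IH|[St' [t0 [Rt0 tt]]]].
  by apply: trPS => y /=; rewrite mem_cat => ->.
have Tt0 : T t0 by have [] := Reach_sub Tx0 qx0 R00 Rt0.
have [ab abP [w0 [E1 E2]]] := HPl Tt0 St'.1 tt.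
have /IH /trPE Cb := Rt0.
set b := tr (- v) t0 in Cb.
have exw : exists w, tr w ab.1 = b by exists (w0 - v); rewrite /b E1 trD addrC.
have okab : tileok ab.1 by rewrite -(trK w0 ab.1) -E1; apply: tileok_tr; apply: tiling_ok hT Tt0.
have cs : cstep b ab = tr (w0 - v) ab.2.
  rewrite /cstep; case: pselect => [H|]; last by move/(_ exw).
  case: (cid H) => w /= Hw; congr tr; apply: (tr_rigid okab).
  by rewrite Hw /b E1 trD addrC.
apply/trPE; rewrite /= mem_cat; apply/orP; right.
have -> : tr (- v) t = cstep b ab by rewrite cs E2 trD addrC.
by apply: allpairs_f.
Qed.

End Cand.

Section Subsets.
Variables (R : realType) (d : nat).
Local Notation Tile := (Tile R d).

Lemma finite_subsets (s : seq Tile) : finite_set [set Y : set Tile | Y `<=` [set` s]].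
Proof.
pose img (g : {set 'I_(size s)}) : set Tile := [set y | exists i : 'I_(size s), i \in g /\ nth (@tile0 R d) s i = y].
suff -> : [set Y : set Tile | Y `<=` [set` s]] = img @` [set: {set 'I_(size s)}].
  by apply: finite_image; exact: finite_finset.
apply/seteqP; split => Y.
- move=> /= HY; exists (finset (fun i : 'I_(size s) => `[< Y (nth (@tile0 R d) s i) >])) => //.
  apply/seteqP; split => y.
  + by case=> i [+ <-]; rewrite inE => /asboolP.
  + move=> Yy; have ys : y \in s by apply: HY.
    have ilt : (index y s < size s)%N by rewrite index_mem.
    exists (Ordinal ilt); split; last exact: nth_index.
    by rewrite inE; apply/asboolP; rewrite /= nth_index.
- case=> g _ <- y [i [_ <-]] /=; exact: mem_nth.
Qed.

End Subsets.

Section GeoMain.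
Variables (R : realType) (d : nat).
Local Notation Tile := (Tile R d).
Local Notation Point := (Point R d).
Variable T : set Tile.
Hypothesis hT : is_tiling T.
Hypothesis hF : FLC T.

Lemma geo_cover r : exists (Pl : seq (Tile * Tile)) (N : nat) (Rb : R),
  forall x, T x -> exists q ab v, x.1 q /\ ab \in Pl /\ x = tr v ab.1 /\
    Fp r T x `<=` Sq T q Rb /\ finite_set (Sq T q Rb) /\
    Fp r T x `<=` trP v [set` Cand Pl ab.1 N].
Proof.
have [Pl HPl] := Plist_ex hF.
have [D hD] := unif_diam hT hF.
have [rho rho0 hrho] := unif_rho hT hF.
pose R0 := `|r| + `|D|.
have R00 : 0 <= R0 by rewrite addr_ge0.
exists Pl, (NB d D rho R0), R0 => x Tx.
have [_ [_ [q qx]]] := T_ok hT Tx.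
have [ab abP [v [E1 _]]] := HPl x x Tx Tx (touch_refl hT Tx).
have FS : Fp r T x `<=` Sq T q R0.
  move=> s [Ts [p [q' [ip [xq' pq']]]]]; split => //; exists p; split.
    exact: interior_subset.
  have -> : p - q = (p - q') + (q' - q) by rewrite addrA subrK.
  apply: le_trans (ler_normD _ _) _; apply: lerD.
    by apply: le_trans (ltW pq') _; exact: ler_norm.
  by apply: le_trans (hD _ Tx _ _ xq' qx) _; exact: ler_norm.
exists q, ab, v; split => //; split => //; split => //; split => //; split.
  exact: (Sq_finite hT hD rho0 hrho).
move=> s Fs; have Ss := FS _ Fs.
have [p [sp pq]] := Ss.2.
have [k Rk] := Reach_all hT hD rho0 hrho Tx qx R00 Ss.1 sp pq.
have := Reach_stab hT hD rho0 hrho Tx qx R00 Rk.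
exact: (Reach_Cand hT HPl Tx qx R00 E1).
Qed.

Lemma geo_finite (r : R) x : T x -> finite_set (Fp r T x).
Proof.
have [Pl [N [Rb H]]] := geo_cover r => Tx.
have [q [ab [v [_ [_ [_ [FS [fin _]]]]]]]] := H x Tx.
exact: sub_finite_set FS fin.
Qed.

Lemma geo_classes (r : R) : exists xs : seq Tile, (forall x, x \in xs -> T x) /\
  (forall x, T x -> exists2 x', x' \in xs & same_pointed (Fp r T x) x (Fp r T x') x').
Proof.
have [Pl [N [Rb H]]] := geo_cover r.
pose shapes := [seq ab.1 | ab <- Pl].
pose Cs := \bigcup_(a in [set` shapes])
   ((fun Y => (a, Y)) @` [set Y : set Tile | Y `<=` [set` Cand Pl a N]]).
have finCs : finite_set Cs.
  apply: bigcup_finite; first exact: finite_seq.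
  by move=> a _; apply: finite_image; exact: finite_subsets.
pose Pc (c : Tile * set Tile) (x : Tile) :=
  T x /\ exists v, x = tr v c.1 /\ Fp r T x = trP v c.2.
pose Real := Cs `&` [set c | exists x, Pc c x].
pose rep c := xget (@tile0 R d) (Pc c).
have repP : forall c, Real c -> Pc c (rep c).
  by move=> c [_ ex]; apply: xgetPex.
have finI : finite_set (rep @` Real) by apply: finite_image; exact: finite_setIl.
have [xs Exs] := (iffLR (finite_seqP _)) finI.
exists xs; split.
  move=> x xin; have : (rep @` Real) x by rewrite Exs.
  case=> c Rc <-.
  by have [] := repP c Rc.
move=> x Tx.
have [q [ab [v [_ [abP [E1 [_ [_ FC]]]]]]]] := H x Tx.
pose c := (ab.1, trP (- v) (Fp r T x)).
have Pcx : Pc c x.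
  split => //; exists v; split => //; by rewrite /c /= trPD addNr trP0.
have Rc : Real c.
  split; last by exists x.
  exists ab.1; first by rewrite /= map_f.
  exists (trP (- v) (Fp r T x)) => //.
  by move=> y; rewrite -(trPK v [set` Cand Pl ab.1 N]); move: y; apply: trPS.
have [Tx' [v' [E1' E2']]] := repP c Rc.
exists (rep c).
  have : [set` xs] (rep c) by rewrite -Exs; exists c.
  by [].
exists (v' - v); split.
- by rewrite E2' /c /= trPD addrC.
- by rewrite E1' /c /= E1 trD addrC subrK.
Qed.

End GeoMain.

Section Misc.
Variables (R : realType) (d : nat).
Local Notation Tile := (Tile R d).
Local Notation Point := (Point R d).
Implicit Types (M W : set Tile) (x y s t : Tile).

Lemma sp_refl M x : same_pointed M x M x.
Proof. by exists 0; rewrite trP0 tr0. Qed.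

Lemma sp_sym M x M' x' : same_pointed M x M' x' -> same_pointed M' x' M x.
Proof. by case=> v [<- <-]; exists (- v); rewrite trPK trK. Qed.

Lemma sp_trans M x M' x' M'' x'' : same_pointed M x M' x' -> same_pointed M' x' M'' x'' ->
  same_pointed M x M'' x''.
Proof. by case=> v [<- <-] [v' [<- <-]]; exists (v + v'); rewrite trPD trD. Qed.

Lemma sp_Fp (r r' : R) W x W' x' : r <= r' ->
  same_pointed (Fp r' W x) x (Fp r' W' x') x' -> same_pointed (Fp r W x) x (Fp r W' x') x'.
Proof.
move=> rr [v [E1 E2]]; exists v; split => //.
by rewrite -(Fp_Fp _ _ rr) -Fp_tr E1 E2 Fp_Fp.
Qed.

Lemma patch_tr (r : R) v W x : Defs.patch r (trP v W, tr v x) = trP v (Defs.patch r (W, x)).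
Proof.
apply/seteqP; split => s.
- case=> /trPE Ws [p [q [sp [/imgaddE xq pq]]]]; apply/trPE; split => //.
  exists (p - v), (q - v); split; first by exists p.
  by split => //; rewrite opprB addrA subrK.
- case=> s' [Ws' [p [q [sp [xq pq]]]]] <-; split; first by exists s'.
  exists (p + v), (q + v); split; first by exists p.
  split; first by exists q.
  by rewrite opprD addrA addrAC addrK.
Qed.

Lemma Fp_patch (n r : R) W x : n <= r -> Fp n W x `<=` Defs.patch r (W, x).
Proof.
move=> nr s [Ws [p [q [ip [xq pq]]]]]; split => //; exists p, q; split.
  exact: interior_subset.
by split => //; apply: le_trans (ltW pq) nr.
Qed.

Lemma patch_Fp (n r : R) W x : (forall s, W s -> tileok s) -> r + 1 <= n ->
  Defs.patch r (W, x) `<=` Fp n W x.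
Proof.
move=> ok rn s [Ws [p [q [sp [xq pq]]]]]; split => //.
have [p' [ip' pp']] := tileok_approx (ok _ Ws) sp ltr01.
exists p', q; split => //; split => //.
have -> : p' - q = (p' - p) + (p - q) by rewrite addrA subrK.
apply: le_lt_trans (ler_normD _ _) _; apply: lt_le_trans rn.
rewrite (addrC r); apply: ltr_leD => //; by rewrite normB_sym.
Qed.

Lemma Fp_between (n : R) W V x : Fp n W x `<=` V -> V `<=` W -> Fp n V x = Fp n W x.
Proof.
move=> h1 h2; apply/seteqP; split => s; first by case=> Vs ns; split => //; apply: h2.
by move=> Fs; split; [apply: h1|case: Fs].
Qed.

Lemma patch_between (r : R) W V x : Defs.patch r (W, x) `<=` V -> V `<=` W ->
  Defs.patch r (V, x) = Defs.patch r (W, x).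
Proof.
move=> h1 h2; apply/seteqP; split => s; first by case=> Vs ns; split => //; apply: h2.
by move=> Fs; split; [apply: h1|case: Fs].
Qed.

End Misc.

Section HullFacts.
Variables (R : realType) (d : nat).
Local Notation Tile := (Tile R d).
Local Notation Point := (Point R d).
Variable T : set Tile.
Hypothesis hT : is_tiling T.

Lemma hull_Fp (w : PTiling R d) (n : R) : hull T w ->
  exists2 x, T x & same_pointed (Fp n w.1 w.2) w.2 (Fp n T x) x.
Proof.
case: w => W X [hW [WX H]] /=.
have [x [Tx [v [E1 E2]]]] := H n.
exists x => //; exists v; split => //.
rewrite -(@Fp_between _ _ n W (Defs.patch n (W, X))); last 2 first.
- exact: Fp_patch.
- by move=> s [].
rewrite -Fp_tr E1 E2; apply: Fp_between; first exact: Fp_patch.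
by move=> s [].
Qed.

Lemma Fp_occ_eq (W : set Tile) (n : R) x X v : is_tiling W ->
  trP v (Fp n T x) `<=` W -> tr v x = X -> trP v (Fp n T x) = Fp n W X.
Proof.
move=> hW sub E; apply/seteqP; split => s.
  move=> Hs; split; first exact: sub.
  by case: Hs => t [_ nt] <-; rewrite -E nearTl_tr.
case=> Ws [p [q [ip [Xq pq]]]].
have [e1 e10 He1] := iffLR (interiorP _ _) ip.
pose e := Num.min e1 (n - `|p - q|).
have e0 : 0 < e by rewrite lt_min e10 subr_gt0.
have [_ [_ [cov _]]] := hT.
have [t [Tt tp]] := cov (p - v).
have [p' [ip' pp']] := tileok_approx (tiling_ok hT Tt) tp e0.
have Ft : Fp n T x t.
  split => //; exists p', (q - v); split => //; split.
    by move: Xq; rewrite -E => /imgaddE.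
  have -> : p' - (q - v) = (p' - (p - v)) + (p - q).
    by rewrite !opprB -addrA [_ + (p - q)]addrA subrK.
  apply: le_lt_trans (ler_normD _ _) _.
  rewrite -ltrBrDr normB_sym; apply: lt_le_trans pp' _; by rewrite ge_min lexx orbT.
have Wt : W (tr v t) by apply: sub; exists t.
have it : interior (tr v t).1 (p' + v) by rewrite /= interior_tr; exists p'.
have sp : s.1 (p' + v).
  apply: He1; have -> : p - (p' + v) = (p - v) - p' by rewrite opprD addrA addrAC.
  by apply: lt_le_trans pp' _; rewrite ge_min lexx.
have <- := tiling_int_mem hW Wt Ws it sp.
by exists t.
Qed.

End HullFacts.

Section Ru.
Variables (R : realType) (d : nat).
Local Notation Tile := (Tile R d).
Local Notation Point := (Point R d).
Variable T : set Tile.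
Hypothesis hT : is_tiling T.

Lemma MII_ok (c : DP R d) s : MII T c -> pat c s -> tileok s.
Proof.
case=> _ [_ [_ [v0 sub]]] cs.
by rewrite -(trK v0 s); apply: tileok_tr; apply: (tiling_ok hT); apply: sub; exists s.
Qed.

Lemma Ru_lemma (u : DP R d) : MII T u -> exists n0 : nat, forall n : R, n0%:R <= n ->
  forall W X v, trP v (pat u) `<=` W -> tr v (pt1 u) = X -> trP v (pat u) `<=` Fp n W X.
Proof.
move=> hu; have [fin [p1 _]] := hu.
have [l El] := iffLR (finite_seqP _) fin.
have okx : tileok (pt1 u) by apply: (MII_ok hu).
have [_ [_ [q qx]]] := okx.
have [m Hm] : exists m, forall s, s \in l -> nearTl m (pt1 u) s.
  apply: list_ub; first by move=> s D D' DD' H; apply: nearTl_mono H.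
  move=> s sl; have ps : pat u s by rewrite El.
  have [p ip] := tileok_int (MII_ok hu ps).
  by exists (`|p - q| + 1), p, q; split => //; split => //; rewrite ltrDl.
exists (Num.truncn m).+1 => n nn W X v sub E s' Hs'.
split; first exact: sub.
case: Hs' => s ps <-; rewrite -E nearTl_tr.
have sl : [set` l] s by rewrite -El.
apply: nearTl_mono (Hm _ sl); apply: le_trans nn; exact/ltW/truncnS_gt.
Qed.

End Ru.

Lemma pigeon (A : eqType) (l : seq A) (Q : A -> nat -> Prop) :
  (forall a m m', (m' <= m)%N -> Q a m -> Q a m') ->
  (forall m, exists2 a, a \in l & Q a m) -> exists2 a, a \in l & forall m, Q a m.
Proof.
elim: l Q => [|b l IH] Q anti H; first by have [a] := H 0%N.
case: (pselect (forall m, Q b m)) => [Hb|]; first by exists b => //; exact: mem_head.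
move/existsNP => [m0 nQ].
have [a al Ha] : exists2 a, a \in l & forall m, Q a (m0 + m)%N.
  apply: (IH (fun a m => Q a (m0 + m)%N)).
    by move=> a m m' mm; apply: anti; rewrite leq_add2l.
  move=> m; have [a] := H (m0 + m)%N; rewrite inE => /orP [/eqP ->|al] Qa.
    by exfalso; apply: nQ; apply: anti Qa; exact: leq_addr.
  by exists a.
exists a; first by rewrite inE al orbT.
by move=> m; apply: anti (Ha m); exact: leq_addl.
Qed.

Section Main.
Variables (R : realType) (d : nat).
Local Notation Tile := (Tile R d).
Local Notation Point := (Point R d).
Variable T : set Tile.
Hypothesis hT : is_tiling T.
Hypothesis hF : FLC T.
Variable N : set (DP R d).
Variable u : DP R d.
Hypothesis hu : MII T u.
Variable n0 : nat.
Hypothesis hn0 : forall n : R, n0%:R <= n ->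
  forall W X v, trP v (pat u) `<=` W -> tr v (pt1 u) = X -> trP v (pat u) `<=` Fp n W X.

Definition L (n : nat) : R := (n0 + n).+1%:R.

Lemma L_gt0 n : 0 < L n. Proof. by rewrite /L ltr0n. Qed.
Lemma L_ge n : n0%:R <= L n. Proof. rewrite /L ler_nat; apply: leqW; exact: leq_addr. Qed.
Lemma L_mono n m : (n <= m)%N -> L n <= L m.
Proof. by move=> nm; rewrite /L ler_nat ltnS leq_add2l. Qed.

Definition good (P : set Tile) := exists c' v, N c' /\ trP v (pat c') `<=` P.
Definition uocc (P : set Tile) x := exists v, trP v (pat u) `<=` P /\ tr v (pt1 u) = x.
Definition Fn n x := Fp (L n) T x.
Definition Bad n x := T x /\ uocc (Fn n x) x /\ ~ good (Fn n x).

Lemma good_tr v P : good P -> good (trP v P).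
Proof. by case=> c' [v' [Nc sub]]; exists c', (v' + v); split => //; rewrite -trPD; apply: trPS. Qed.

Lemma good_mono P P' : P `<=` P' -> good P -> good P'.
Proof. by move=> PP [c' [v [Nc sub]]]; exists c', v; split => //; apply: subset_trans PP. Qed.

Lemma uocc_tr v P x : uocc P x -> uocc (trP v P) (tr v x).
Proof. by case=> v' [sub E]; exists (v' + v); split; [rewrite -trPD; apply: trPS|rewrite -trD E]. Qed.

Lemma Bad_class n x y : T y -> same_pointed (Fn n x) x (Fn n y) y -> Bad n x -> Bad n y.
Proof.
move=> Ty [v [E1 E2]] [Tx [uo ng]]; split => //; split.
  by rewrite -E1 -E2; apply: uocc_tr.
by move=> gy; apply: ng; rewrite -(trPK v (Fn n x)) E1; apply: good_tr.
Qed.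

Lemma Bad_mono n m x : (n <= m)%N -> Bad m x -> Bad n x.
Proof.
move=> nm [Tx [[v [sub E]] ng]]; split => //; split.
  exists v; split => //; apply: (hn0 (L_ge n)) E.
  by apply: subset_trans sub _; exact: Fp_sub.
by move=> g; apply: ng; apply: good_mono g; apply: Fp_mono => //; exact: L_mono.
Qed.

Lemma sp_Fn n m x y : (n <= m)%N -> same_pointed (Fn m x) x (Fn m y) y ->
  same_pointed (Fn n x) x (Fn n y) y.
Proof. by move=> nm; apply: sp_Fp; exact: L_mono. Qed.

Definition Ext n x := forall m, (n <= m)%N -> exists y, Bad m y /\ same_pointed (Fn n x) x (Fn n y) y.

Lemma claimA : (forall m, exists z, Bad m z) -> exists x, Bad 0 x /\ Ext 0 x.
Proof.
move=> H; have [xs [xsT xsC]] := geo_classes hT hF (L 0).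
pose Q x' m := Bad 0 x' /\ exists y, Bad m y /\ same_pointed (Fn 0 x') x' (Fn 0 y) y.
have [x' x'l Hx'] : exists2 x', x' \in xs & forall m, Q x' m.
  apply: pigeon.
    by move=> a m m' mm [B0 [y [By sp]]]; split => //; exists y; split => //; apply: Bad_mono By.
  move=> m; have [z Bz] := H m.
  have B0z : Bad 0 z by apply: Bad_mono Bz.
  have [x' x'l sp] := xsC z B0z.1.
  exists x' => //; split; first exact: Bad_class (xsT _ x'l) sp B0z.
  by exists z; split => //; apply: sp_sym.
exists x'; split; first by have [] := Hx' 0%N.
by move=> m _; have [_ ?] := Hx' m.
Qed.

Lemma claimB n x : Bad n x -> Ext n x ->
  exists y, [/\ Bad n.+1 y, Ext n.+1 y & same_pointed (Fn n x) x (Fn n y) y].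
Proof.
move=> Bx Ex; have [xs [xsT xsC]] := geo_classes hT hF (L n.+1).
pose Q x' k := [/\ Bad n.+1 x', same_pointed (Fn n x) x (Fn n x') x' &
  exists y, Bad (n.+1 + k) y /\ same_pointed (Fn n.+1 x') x' (Fn n.+1 y) y].
have [x' x'l Hx'] : exists2 x', x' \in xs & forall k, Q x' k.
  apply: pigeon.
    move=> a m m' mm [B1 sp [y [By sp2]]]; split => //; exists y; split => //.
    by apply: Bad_mono By; rewrite leq_add2l.
  move=> k; have [z [Bz spz]] := Ex (n.+1 + k)%N (leqW (leq_addr _ _)).
  have B1z : Bad n.+1 z by apply: Bad_mono Bz; exact: leq_addr.
  have [x' x'l sp] := xsC z B1z.1.
  exists x' => //; split.
  - exact: Bad_class (xsT _ x'l) sp B1z.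
  - by apply: sp_trans spz _; apply: sp_Fn sp.
  - by exists z; split => //; apply: sp_sym.
exists x'; split.
- by have [] := Hx' 0%N.
- move=> m nm; have [_ _ [y [By sp]]] := Hx' (m - n.+1)%N.
  by exists y; rewrite subnKC in By.
- by have [] := Hx' 0%N.
Qed.


Section Limit.
Variable g : nat * Tile -> Tile * Point.
Variable x0 : Tile.
Hypothesis Hg : forall n x, Bad n x -> Ext n x ->
  [/\ Bad n.+1 (g (n, x)).1, Ext n.+1 (g (n, x)).1,
      trP (g (n, x)).2 (Fn n x) = Fn n (g (n, x)).1 & tr (g (n, x)).2 x = (g (n, x)).1].
Hypothesis Hx0 : Bad 0 x0 /\ Ext 0 x0.

Fixpoint sq (n : nat) : Tile * Point :=
  if n is n'.+1 then ((g (n', (sq n').1)).1, (sq n').2 - (g (n', (sq n').1)).2)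
  else (x0, 0).

Definition ys n := (sq n).1.
Definition av n := (sq n).2.

Lemma sq_inv n : [/\ Bad n (ys n), Ext n (ys n) & tr (av n) (ys n) = x0].
Proof.
elim: n => [|n [B E X]]; first by split; [case: Hx0|case: Hx0|rewrite /av /ys /= tr0].
have [B' E' _ Et] := Hg B E; split => //.
by rewrite /ys /av /= -Et trD addrC subrK.
Qed.

Definition Y n := trP (av n) (Fn n (ys n)).

Lemma cohY n : Fp (L n) (Y n.+1) x0 = Y n.
Proof.
have [B E X] := sq_inv n; have [_ _ X1] := sq_inv n.+1.
have [_ _ Ef Et] := Hg B E.
rewrite /Y -X1 Fp_tr {1}/Fn Fp_Fp; last by apply: L_mono.
rewrite -/(Fn n (ys n.+1)).
rewrite [ys n.+1]/ys /= -Ef trPD /av /=.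
by rewrite addrC subrK.
Qed.

Lemma Y_sub n : Y n `<=` Y n.+1.
Proof. by rewrite -cohY; exact: Fp_sub. Qed.

Lemma Y_mono n m : (n <= m)%N -> Y n `<=` Y m.
Proof.
move=> /subnK <-; elim: (m - n)%N => [|k IH] //=.
by apply: subset_trans IH _; rewrite addSn; exact: Y_sub.
Qed.

Lemma Y_coh n m : (n <= m)%N -> Fp (L n) (Y m) x0 = Y n.
Proof.
move=> /subnK <-; elim: (m - n)%N => [|k IH] /=.
  by rewrite add0n -{1}cohY Fp_Fp ?lexx // cohY.
by rewrite addSn -(Fp_Fp _ _ (L_mono (leq_addl k n))) cohY IH.
Qed.

Definition Wl := \bigcup_n Y n.

Lemma Fp_W n : Fp (L n) Wl x0 = Y n.
Proof.
apply/seteqP; split => s.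
- case=> [[m _ Ym] ns]; case: (leqP m n) => mn; first exact: Y_mono mn _ Ym.
  by rewrite -(Y_coh (ltnW mn)); split.
- move=> Yn; split; first by exists n.
  by move: Yn; rewrite -cohY => -[].
Qed.

Lemma Y_T n s : Y n s -> exists2 t, T t & s = tr (av n) t.
Proof. by case=> t [Tt _] <-; exists t. Qed.

Lemma W_ok s : Wl s -> tileok s.
Proof. by case=> n _ /Y_T [t Tt ->]; apply: tileok_tr; apply: tiling_ok hT Tt. Qed.

Lemma Y_fin n : finite_set (Y n).
Proof. by apply: finite_image; apply: (geo_finite hT hF); have [] := sq_inv n; case. Qed.

Lemma trunc_L (x : R) : exists n, x < L n.
Proof.
exists (Num.truncn x); apply: lt_le_trans (truncnS_gt _) _.
by rewrite /L ler_nat ltnS leq_addl.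
Qed.

Lemma x0_T : T x0. Proof. by case: Hx0 => -[]. Qed.

Lemma W_tiling : is_tiling Wl.
Proof.
split; [|split; [|split]].
- apply: bigcup_countable; first exact: card_lexx.
  by move=> n _; apply: finite_set_countable; exact: Y_fin.
- by move=> t /W_ok.
- move=> p; have [_ [_ [q qx]]] := tiling_ok hT x0_T.
  have [n Ln] := trunc_L (`|p - q| + 1).
  have [_ [_ [cov _]]] := hT.
  have [t [Tt tp]] := cov (p - av n).
  have [p' [ip' pp']] := tileok_approx (tiling_ok hT Tt) tp ltr01.
  have [[Tyn _] _ Xn] := sq_inv n.
  have Ft : Fn n (ys n) t.
    split => //; exists p', (q - av n); split => //; split.
      by move: qx; rewrite -Xn => /imgaddE.
    have -> : p' - (q - av n) = (p' - (p - av n)) + (p - q).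
      by rewrite !opprB -addrA [_ + (p - q)]addrA subrK.
    apply: le_lt_trans (ler_normD _ _) _; apply: lt_trans Ln.
    by rewrite addrC ltrD2l normB_sym.
  exists (tr (av n) t); split; first by exists n => //; exists t.
  by apply/imgaddE.
- move=> s s' [n _ Yn] [m _ Ym] ss'.
  have Yk : Y (maxn n m) s by apply: Y_mono Yn; exact: leq_maxl.
  have Yk' : Y (maxn n m) s' by apply: Y_mono Ym; exact: leq_maxr.
  case: Yk => t [Tt _] Et; case: Yk' => t' [Tt' _] Et'.
  have tt' : t <> t' by move=> E; apply: ss'; rewrite -Et -Et' E.
  have [_ [_ [_ dis]]] := hT.
  have D0 := dis _ _ Tt Tt' tt'.
  apply/seteqP; split => // z [].
  rewrite -Et -Et' /= !interior_tr => /imgaddE i1 /imgaddE i2.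
  by have : (interior t.1 `&` interior t'.1) (z - av (maxn n m)) by []; rewrite D0.
Qed.

Lemma W_hull : hull T (Wl, x0).
Proof.
split; first exact: W_tiling.
split.
  exists 0%N => //; rewrite /Y; have [_ _ X0] := sq_inv 0.
  rewrite /av /ys /= trP0 /Fn; apply: Fp_self; [exact: L_gt0|exact: tiling_ok hT x0_T|exact: x0_T].
move=> r; have [n Ln] := trunc_L (`|r| + 1).
have [[Tyn _] _ Xn] := sq_inv n.
exists (ys n); split => //.
have Ln' : r + 1 <= L n by apply: ltW; apply: le_lt_trans Ln; rewrite lerD2r ler_norm.
have P1 : Defs.patch r (Wl, x0) = Defs.patch r (Y n, x0).
  apply/esym/patch_between; first by rewrite -Fp_W; apply: patch_Fp => // s /W_ok.
  by move=> s Ys; exists n.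
have P2 : Defs.patch r (Fn n (ys n), ys n) = Defs.patch r (T, ys n).
  apply: patch_between; last exact: Fp_sub.
  by apply: patch_Fp => // s Ts; apply: tiling_ok hT Ts.
exists (- av n); split.
- by rewrite P1 /Y -Xn patch_tr trPK P2.
- by rewrite -Xn trK.
Qed.

Lemma W_u : occurs_at u (Wl, x0).
Proof.
have [[_ [[v [sub E]] _]] _] := Hx0.
exists v; split => //=; move=> s /sub F0; exists 0%N => //.
by rewrite /Y /av /ys /= trP0.
Qed.

Lemma fin_in_Y (A : set Tile) : finite_set A -> A `<=` Wl -> exists K, A `<=` Y K.
Proof.
move=> /finite_seqP [l ->]; elim: l => [|b l IH] sub; first by exists 0%N.
have [K HK] : exists K, [set` l] `<=` Y K.
  by apply: IH => s sl; apply: sub; rewrite /= inE sl orbT.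
have [n _ Yn] : Wl b by apply: sub; rewrite /= inE eqxx.
exists (maxn K n) => s; rewrite /= inE => /orP [/eqP ->|sl].
  by apply: Y_mono Yn; exact: leq_maxr.
by apply: Y_mono (HK _ sl); exact: leq_maxl.
Qed.

Lemma limit_contra : sub_almost_groupoid T N -> regular T N -> False.
Proof.
move=> [NM _] hreg.
have [c [w' [_ [_ [[v [_ [_ [E1 _]]]] [c' [Nc [_ [v2 [sub _]]]]]]]]]] := hreg _ W_hull.
rewrite /= E1 /= in sub.
have finA : finite_set (trP v2 (pat c')) by apply: finite_image; have [] := NM _ Nc.
have [K HK] := fin_in_Y finA sub.
have [[_ [_ ng]] _ _] := sq_inv K.
apply: ng; rewrite -(trPK (av K) (Fn K (ys K))); apply: good_tr.
by exists c', v2.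
Qed.

End Limit.

End Main.

Lemma dedup (A : eqType) (x0 : A) (l : seq A) (E : A -> A -> Prop) :
  (forall x, E x x) -> (forall x y, E x y -> E y x) ->
  exists l', [/\ (forall x, x \in l' -> x \in l),
    (forall x, x \in l -> exists2 x', x' \in l' & E x x') &
    (forall i j, (i < size l')%N -> (j < size l')%N -> E (nth x0 l' i) (nth x0 l' j) -> i = j)].
Proof.
move=> Er Es; elim: l => [|a l [l' [sub cov pw]]]; first by exists [::].
case: (pselect (exists2 x', x' \in l' & E a x')) => [[x' x'l Ex]|nex].
  exists l'; split.
  - by move=> x /sub xl; rewrite inE xl orbT.
  - by move=> x; rewrite inE => /orP [/eqP ->|/cov]; [exists x'|].
  - exact: pw.
exists (a :: l'); split.
- by move=> x; rewrite !inE => /orP [->|/sub ->] //; rewrite orbT.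
- move=> x; rewrite inE => /orP [/eqP ->|/cov [x' x'l Ex]]; first by exists a; rewrite ?mem_head.
  by exists x' => //; rewrite inE x'l orbT.
- case=> [|i] [|j] //= ilt jlt.
  + by move=> H; exfalso; apply: nex; exists (nth x0 l' j) => //; apply: mem_nth.
  + by move=> /Es H; exfalso; apply: nex; exists (nth x0 l' i) => //; apply: mem_nth.
  + by move=> H; congr S; apply: pw.
Qed.

Unset Implicit Arguments.
Local Close Scope ring_scope.

Theorem mainTheorem12 (R : realType) (d : nat) (T : set (Tile R d))
  (N : set (DP R d)) :
  is_tiling T -> FLC T -> sub_almost_groupoid T N -> regular T N ->
  forall u : DP R d, MII T u -> is_unit u ->
  exists (n : nat) (c : 'I_n -> DP R d),
    (forall i, MII T (c i)) /\
    (forall w, Uset T u w <-> exists i, Uset T (Lu (c i)) w) /\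
    (forall i j, i <> j -> Uset T (Lu (c i)) `&` Uset T (Lu (c j)) = set0) /\
    (forall i, Uset T (Ru (c i)) `<=` OmegaN T N).
Proof.
move=> hT hF hN hreg u hu _.
have [n0 hn0] := Ru_lemma hT hu.
have [n nB] : exists n, forall x, ~ Bad T N u n0 n x.
  apply: contrapT => H.
  have H' : forall m, exists z, Bad T N u n0 m z.
    move=> m; apply: contrapT => Hm; apply: H; exists m => x Bx; apply: Hm; by exists x.
  have [x0 [B0 E0]] := claimA hT hF hn0 H'.
  have step : forall p : nat * Tile R d, exists yb : Tile R d * Point R d,
      Bad T N u n0 p.1 p.2 -> Ext T N u n0 p.1 p.2 ->
      [/\ Bad T N u n0 p.1.+1 yb.1, Ext T N u n0 p.1.+1 yb.1,
          trP yb.2 (Fn T n0 p.1 p.2) = Fn T n0 p.1 yb.1 & tr yb.2 p.2 = yb.1].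
    case=> m x /=.
    case: (pselect (Bad T N u n0 m x /\ Ext T N u n0 m x)) => [[Bx Ex]|nBE]; last first.
      by exists (x, 0%R) => Bx Ex; exfalso; apply: nBE.
    have [y [By Ey [v [E1 E2]]]] := claimB hT hF hn0 Bx Ex.
    by exists (y, v).
  have [g Hg] := choice step.
  apply: (limit_contra hT hF (g := g) (x0 := x0) _ (conj B0 E0)) hN hreg.
  by move=> m x Bx Ex; apply: (Hg (m, x)).
pose rr := L R n0 n.
have rr0 : (0 < rr)%R by apply: L_gt0.
have [xs [xsT xsC]] := geo_classes hT hF rr.
pose xs1 := [seq x <- xs | `[< uocc u (Fp rr T x) x >]].
pose Eq x y := same_pointed (Fp rr T x) x (Fp rr T y) y.
have [l' [subl covl pwl]] := dedup (@tile0 R d) xs1 (fun x => sp_refl (Fp rr T x) x)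
  (fun x y => @sp_sym R d (Fp rr T x) x (Fp rr T y) y).
have l'P : forall x, x \in l' -> [/\ T x, uocc u (Fp rr T x) x & good N (Fp rr T x)].
  move=> x /subl; rewrite mem_filter => /andP [/asboolP uo xxs].
  have Tx := xsT _ xxs; split => //.
  apply: contrapT => ng; apply: (nB x); split => //.
pose k := size l'.
pose xi (i : 'I_k) := nth (@tile0 R d) l' i.
have xiP : forall i : 'I_k, xi i \in l' by move=> i; apply: mem_nth.
have goodi : forall i : 'I_k, exists cv : DP R d * Point R d,
    N cv.1 /\ trP cv.2 (pat cv.1) `<=` Fp rr T (xi i).
  by move=> i; have [_ _ [c' [v [Nc sub]]]] := l'P _ (xiP i); exists (c', v).
have [cv Hcv] := choice goodi.
pose c (i : 'I_k) := mkDP (Fp rr T (xi i)) (xi i) (tr (cv i).2 (pt2 (cv i).1)).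
have [NM _] := hN.
exists k, c; split; [|split; [|split]].
- move=> i; have [Tx _ _] := l'P _ (xiP i); have [Nc subc] := Hcv i.
  split; first exact: (geo_finite hT hF).
  split; first by apply: Fp_self => //; exact: tiling_ok hT Tx.
  split.
    by apply: subc; apply: trP_mem; have [_ [_ []]] := NM _ Nc.
  by exists 0%R; rewrite trP0; exact: Fp_sub.
- move=> w; split.
  + case=> hw [v [subu Eu]].
    have [x Tx sp1] := hull_Fp rr hw.
    have uw : uocc u (Fp rr w.1 w.2) w.2.
      exists v; split => //; apply: (hn0 rr) subu Eu; exact: L_ge.
    have ux : uocc u (Fp rr T x) x by case: sp1 => v1 [<- <-]; apply: uocc_tr.
    have [x' x'xs sp'] := xsC x Tx.
    have ux' : uocc u (Fp rr T x') x' by case: sp' => v' [<- <-]; apply: uocc_tr.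
    have x'1 : x' \in xs1 by rewrite mem_filter x'xs andbT; apply/asboolP.
    have [x'' x''l E''] := covl x' x'1.
    have ilt : (index x'' l' < k)%N by rewrite index_mem.
    exists (Ordinal ilt); split => //.
    have xiE : xi (Ordinal ilt) = x'' by rewrite /xi /= nth_index.
    have [v3 [E3 E4]] := sp_sym (sp_trans (sp_trans sp1 sp') E'').
    exists v3; split; last by rewrite /= xiE.
    by rewrite /= xiE E3; exact: Fp_sub.
  + case=> i [hw [v [sub E]]]; split => //.
    have [_ ui _] := l'P _ (xiP i).
    have [v' [sub' E']] := uocc_tr v ui.
    exists v'; split; first exact: subset_trans sub' sub.
    by rewrite E' E.
- move=> i j ij; apply/seteqP; split => // w [[hw [v [sub E]]] [_ [v' [sub' E']]]].
  have hW : is_tiling w.1 by case: hw.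
  have e1 := Fp_occ_eq hT hW sub E.
  have e2 := Fp_occ_eq hT hW sub' E'.
  have spij : same_pointed (Fp rr T (xi i)) (xi i) (Fp rr T (xi j)) (xi j).
    apply: (sp_trans (M' := Fp rr w.1 w.2) (x' := w.2)); first by exists v.
    by apply: sp_sym; exists v'.
  by exfalso; apply: ij; apply: val_inj; apply: pwl spij.
- move=> i w [hw [v [sub E]]]; have [Nc subc] := Hcv i.
  exists (cv i).1; split => //; split => //.
  exists ((cv i).2 + v)%R; split.
    by rewrite -trPD; apply: subset_trans _ sub; apply: trPS; exact: subc.
  by rewrite -trD; exact: E.
Qed.
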